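(* Let $\mathcal D$ be a normal duoidal category (so $\iota\colon\bot\to 1$ is an isomorphism), and let $T$ be a double opmonoidal monad on $\mathcal D$. Consider the four linear distributors $\partial^\ell_\ell\colon a\circ(b\bullet c)\cong(a\bullet 1)\circ(b\bullet c)\xrightarrow{\zeta}(a\circ b)\bullet(1\circ c)\cong(a\circ b)\bullet c$, $\partial^\ell_r\colon a\circ(b\bullet c)\cong(1\bullet a)\circ(b\bullet c)\xrightarrow{\zeta}(1\circ b)\bullet(a\circ c)\cong b\bullet(a\circ c)$, $\partial^r_\ell\colon (b\bullet c)\circ a\cong(b\bullet c)\circ(a\bullet 1)\xrightarrow{\zeta}(b\circ a)\bullet(c\circ 1)\cong(b\circ a)\bullet c$, $\partial^r_r\colon (b\bullet c)\circ a\cong(b\bullet c)\circ(1\bullet a)\xrightarrow{\zeta}(b\circ 1)\bullet(c\circ a)\cong b\bullet(c\circ a)$, where the unnamed isomorphisms are built from the unitors of $\bullet$ and $\circ$ and $\iota^{\pm1}$ (using $1\cong\bot$). Then for all objects $a,b,c$ of $\mathcal D$ (in particular for all $T$-algebras): (1) $(T^\circ_{2,a,b}\bullet Tc)\cdot T^\bullet_{2,a\circ b,c}\cdot T\partial^\ell_\ell = \partial^\ell_\ell\cdot(Ta\circ T^\bullet_{2,b,c})\cdot T^\circ_{2,a,b\bullet c}$; (2) $(Tb\bullet T^\circ_{2,c,a})\cdot T^\bullet_{2,b,c\circ a}\cdot T\partial^r_r = \partial^r_r\cdot(T^\bullet_{2,b,c}\circ Ta)\cdot T^\circ_{2,b\bullet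 c,a}$; (3) $(Tb\bullet T^\circ_{2,a,c})\cdot T^\bullet_{2,b,a\circ c}\cdot T\partial^\ell_r = \partial^\ell_r\cdot(Ta\circ T^\bullet_{2,b,c})\cdot T^\circ_{2,a,b\bullet c}$; (4) $(T^\circ_{2,b,a}\bullet Tc)\cdot T^\bullet_{2,b\circ a,c}\cdot T\partial^r_\ell = \partial^r_\ell\cdot(T^\bullet_{2,b,c}\circ Ta)\cdot T^\circ_{2,b\bullet c,a}$. Consequently $T$ lifts the (planar) linearly distributive structure of $\mathcal D$ to $\mathcal D^T$.
   Context: Composition of morphisms is written $g\cdot f$ ($f$ first). A duoidal category is a category $\mathcal D$ with monoidal structures $(\circ,\bot)$ and $(\bullet,1)$ (unitors $\lambda^\circ,\rho^\circ,\lambda^\bullet,\rho^\bullet$, associators $\alpha$), a natural transformation $\zeta_{x,y,a,b}\colon (x\bullet y)\circ(a\bullet b)\to(x\circ a)\bullet(y\circ b)$ and morphisms $\nu\colon\bot\to\bot\bullet\bot$, $\varpi\colon 1\circ 1\to 1$, $\iota\colon\bot\to 1$ such that $(1,\varpi,\iota)$ is a monoid in $(\mathcal D,\circ,\bot)$, $(\bot,\nu,\iota)$ is a comonoid in $(\mathcal D,\bullet,1)$, and: $(\alpha\bullet\alpha)\cdot\zeta_{x\circ a,y\circ b,c,d}\cdot(\zeta_{x,y,a,b}\circ\mathrm{id}) = \zeta_{x,y,a\circ c,b\circ d}\cdot(\mathrm{id}\circ\zeta_{a,b,c,d})\cdot\alpha$; $\alpha\cdot(\zeta_{x,a,y,b}\bullet\mathrm{id})\cdot\zeta_{x\bullet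 a,c,y\bullet b,d} = (\mathrm{id}\bullet\zeta_{a,c,b,d})\cdot\zeta_{x,a\bullet c,y,b\bullet d}\cdot(\alpha\circ\alpha)$; $\zeta_{\bot,\bot,a,b}\cdot(\nu\circ\mathrm{id})=((\lambda^\circ_a)^{-1}\bullet(\lambda^\circ_b)^{-1})\cdot\lambda^\circ_{a\bullet b}$, $\zeta_{a,b,\bot,\bot}\cdot(\mathrm{id}\circ\nu)=((\rho^\circ_a)^{-1}\bullet(\rho^\circ_b)^{-1})\cdot\rho^\circ_{a\bullet b}$, $(\varpi\bullet\mathrm{id})\cdot\zeta_{1,a,1,b}=(\lambda^\bullet_{a\circ b})^{-1}\cdot(\lambda^\bullet_a\circ\lambda^\bullet_b)$, $(\mathrm{id}\bullet\varpi)\cdot\zeta_{a,1,b,1}=(\rho^\bullet_{a\circ b})^{-1}\cdot(\rho^\bullet_a\circ\rho^\bullet_b)$. It is normal if $\bot\cong 1$ (equivalently $\iota$ is invertible). A bimonad on a monoidal category $(\mathcal C,\otimes,I)$ is a monad $(B,\mu,\eta)$ with an opmonoidal structure $B_2\colon B(x\otimes y)\to Bx\otimes By$, $B_0\colon BI\to I$ such that $\mu,\eta$ are opmonoidal natural transformations. A double opmonoidal monad on a duoidal category $\mathcal D$ is a monad $(T,\mu,\eta)$ with bimonad structures $(T^\bullet_2,T^\bullet_0)$ on $(\mathcal D,\bullet,1)$ and $(T^\circ_2,T^\circ_0)$ on $(\mathcal D,\circ,\bot)$ such that $T^\bullet_0\cdot T\varpi=\varpi\cdot(T^\bullet_0\circ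 T^\bullet_0)\cdot T^\circ_{2,1,1}$, $(T^\circ_0\bullet T^\circ_0)\cdot T^\bullet_{2,\bot,\bot}\cdot T\nu=\nu\cdot T^\circ_0$, $T^\bullet_0\cdot T\iota=\iota\cdot T^\circ_0$, and for all objects $\zeta_{Ta,Tb,Tc,Td}\cdot(T^\bullet_{2,a,b}\circ T^\bullet_{2,c,d})\cdot T^\circ_{2,a\bullet b,c\bullet d} = (T^\circ_{2,a,c}\bullet T^\circ_{2,b,d})\cdot T^\bullet_{2,a\circ c,b\circ d}\cdot T\zeta_{a,b,c,d}$. *)

(* Defs.v *)
(* Composition is written  g ⋅ f  (f first). *)

Record CatData := {
  Ob :> Type;
  Hom : Ob -> Ob -> Type;
  idm : forall a, Hom a a;
  comp : forall a b c, Hom b c -> Hom a b -> Hom a c }.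
Arguments Hom {_} _ _.
Arguments idm {_} _.
Arguments comp {_ _ _ _} _ _.
Notation "g ⋅ f" := (comp g f) (at level 40, left associativity).

Record IsCategory (C : CatData) : Prop := {
  comp_idl : forall (a b : C) (f : Hom a b), idm b ⋅ f = f;
  comp_idr : forall (a b : C) (f : Hom a b), f ⋅ idm a = f;
  comp_assoc : forall (a b c d : C) (h : Hom c d) (g : Hom b c) (f : Hom a b),
      h ⋅ (g ⋅ f) = (h ⋅ g) ⋅ f }.

Record Category := { cdata :> CatData; claws : IsCategory cdata }.

Record MonoidalData (C : CatData) := {
  tens : C -> C -> C;
  tensm : forall a b c d : C, Hom a b -> Hom c d -> Hom (tens a c) (tens b d);
  munit : C;
  assoc : forall a b c : C, Hom (tens (tens a b) c) (tens a (tens b c));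
  associ : forall a b c : C, Hom (tens a (tens b c)) (tens (tens a b) c);
  lam : forall a : C, Hom (tens munit a) a;
  lami : forall a : C, Hom a (tens munit a);
  rho : forall a : C, Hom (tens a munit) a;
  rhoi : forall a : C, Hom a (tens a munit) }.
Arguments tens {C} _ _ _.
Arguments tensm {C} _ {a b c d} _ _.
Arguments munit {C} _.
Arguments assoc {C} _ _ _ _.
Arguments associ {C} _ _ _ _.
Arguments lam {C} _ _.
Arguments lami {C} _ _.
Arguments rho {C} _ _.
Arguments rhoi {C} _ _.

Record IsMonoidal (C : CatData) (M : MonoidalData C) : Prop := {
  tens_id : forall a c : C, tensm M (idm a) (idm c) = idm (tens M a c);
  tens_comp : forall (a b e c d k : C) (g : Hom b e) (f : Hom a b)
      (g' : Hom d k) (f' : Hom c d),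
      tensm M (g ⋅ f) (g' ⋅ f') = tensm M g g' ⋅ tensm M f f';
  assoc_nat : forall (a a' b b' c c' : C) (f : Hom a a') (g : Hom b b') (h : Hom c c'),
      assoc M a' b' c' ⋅ tensm M (tensm M f g) h
      = tensm M f (tensm M g h) ⋅ assoc M a b c;
  assoc_inv1 : forall a b c : C, assoc M a b c ⋅ associ M a b c = idm _;
  assoc_inv2 : forall a b c : C, associ M a b c ⋅ assoc M a b c = idm _;
  lam_nat : forall (a b : C) (f : Hom a b),
      lam M b ⋅ tensm M (idm (munit M)) f = f ⋅ lam M a;
  lam_inv1 : forall a : C, lam M a ⋅ lami M a = idm _;
  lam_inv2 : forall a : C, lami M a ⋅ lam M a = idm _;
  rho_nat : forall (a b : C) (f : Hom a b),
      rho M b ⋅ tensm M f (idm (munit M)) = f ⋅ rho M a;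
  rho_inv1 : forall a : C, rho M a ⋅ rhoi M a = idm _;
  rho_inv2 : forall a : C, rhoi M a ⋅ rho M a = idm _;
  triangle : forall a b : C,
      tensm M (idm a) (lam M b) ⋅ assoc M a (munit M) b = tensm M (rho M a) (idm b);
  pentagon : forall a b c d : C,
      assoc M a b (tens M c d) ⋅ assoc M (tens M a b) c d
      = tensm M (idm a) (assoc M b c d) ⋅ assoc M a (tens M b c) d
        ⋅ tensm M (assoc M a b c) (idm d) }.
Arguments IsMonoidal {C} M.

Record Monoidal (C : CatData) := { mdata :> MonoidalData C; mlaws : IsMonoidal mdata }.

Record DuoidalData := {
  dcat : Category;
  circ : Monoidal dcat;
  bul : Monoidal dcat;
  zeta : forall x y a b : dcat,
      Hom (tens circ (tens bul x y) (tens bul a b))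
          (tens bul (tens circ x a) (tens circ y b));
  nu : Hom (munit circ) (tens bul (munit circ) (munit circ));
  varpi : Hom (tens circ (munit bul) (munit bul)) (munit bul);
  iota : Hom (munit circ) (munit bul) }.
Arguments zeta {_} _ _ _ _.
Arguments nu {_}.
Arguments varpi {_}.
Arguments iota {_}.

Definition oc (D : DuoidalData) := tens (circ D).
Definition ob (D : DuoidalData) := tens (bul D).
Definition ocm (D : DuoidalData) {a b c d : dcat D} (f : Hom a b) (g : Hom c d) :=
  tensm (circ D) f g.
Definition obm (D : DuoidalData) {a b c d : dcat D} (f : Hom a b) (g : Hom c d) :=
  tensm (bul D) f g.
Definition bot (D : DuoidalData) := munit (circ D).
Definition one (D : DuoidalData) := munit (bul D).

Record IsDuoidal (D : DuoidalData) : Prop := {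
  zeta_nat : forall (x x' y y' a a' b b' : dcat D) (f : Hom x x') (g : Hom y y')
      (h : Hom a a') (k : Hom b b'),
      zeta x' y' a' b' ⋅ ocm D (obm D f g) (obm D h k)
      = obm D (ocm D f h) (ocm D g k) ⋅ zeta x y a b;
  (* (1, varpi, iota) is a monoid in (D, ∘, ⊥) *)
  varpi_assoc :
      varpi ⋅ ocm D varpi (idm (one D))
      = varpi ⋅ ocm D (idm (one D)) varpi ⋅ assoc (circ D) (one D) (one D) (one D);
  varpi_lunit : varpi ⋅ ocm D iota (idm (one D)) = lam (circ D) (one D);
  varpi_runit : varpi ⋅ ocm D (idm (one D)) iota = rho (circ D) (one D);
  (* (⊥, nu, iota) is a comonoid in (D, •, 1) *)
  nu_coassoc :
      assoc (bul D) (bot D) (bot D) (bot D) ⋅ obm D nu (idm (bot D)) ⋅ nu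
      = obm D (idm (bot D)) nu ⋅ nu;
  nu_lcounit : obm D iota (idm (bot D)) ⋅ nu = lami (bul D) (bot D);
  nu_rcounit : obm D (idm (bot D)) iota ⋅ nu = rhoi (bul D) (bot D);
  zeta_assoc_circ : forall x y a b c d : dcat D,
      obm D (assoc (circ D) x a c) (assoc (circ D) y b d)
        ⋅ zeta (oc D x a) (oc D y b) c d ⋅ ocm D (zeta x y a b) (idm (ob D c d))
      = zeta x y (oc D a c) (oc D b d) ⋅ ocm D (idm (ob D x y)) (zeta a b c d)
        ⋅ assoc (circ D) (ob D x y) (ob D a b) (ob D c d);
  zeta_assoc_bul : forall x y a b c d : dcat D,
      assoc (bul D) (oc D x y) (oc D a b) (oc D c d)
        ⋅ obm D (zeta x a y b) (idm (oc D c d)) ⋅ zeta (ob D x a) c (ob D y b) d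
      = obm D (idm (oc D x y)) (zeta a c b d) ⋅ zeta x (ob D a c) y (ob D b d)
        ⋅ ocm D (assoc (bul D) x a c) (assoc (bul D) y b d);
  zeta_nu_l : forall a b : dcat D,
      zeta (bot D) (bot D) a b ⋅ ocm D nu (idm (ob D a b))
      = obm D (lami (circ D) a) (lami (circ D) b) ⋅ lam (circ D) (ob D a b);
  zeta_nu_r : forall a b : dcat D,
      zeta a b (bot D) (bot D) ⋅ ocm D (idm (ob D a b)) nu
      = obm D (rhoi (circ D) a) (rhoi (circ D) b) ⋅ rho (circ D) (ob D a b);
  zeta_varpi_l : forall a b : dcat D,
      obm D varpi (idm (oc D a b)) ⋅ zeta (one D) a (one D) b
      = lami (bul D) (oc D a b) ⋅ ocm D (lam (bul D) a) (lam (bul D) b);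
  zeta_varpi_r : forall a b : dcat D,
      obm D (idm (oc D a b)) varpi ⋅ zeta a (one D) b (one D)
      = rhoi (bul D) (oc D a b) ⋅ ocm D (rho (bul D) a) (rho (bul D) b) }.

Record Duoidal := { ddata :> DuoidalData; dlaws : IsDuoidal ddata }.

(* Normality: iota : ⊥ -> 1 is an isomorphism (its inverse, unique, as data). *)
Record NormalStructure (D : DuoidalData) := {
  iotai : Hom (one D) (bot D);
  iota_inv1 : iota ⋅ iotai = idm (one D);
  iota_inv2 : iotai ⋅ iota = idm (bot D) }.
Arguments iotai {D} _.

Record MonadData (C : CatData) := {
  T0 :> C -> C;
  T1 : forall a b : C, Hom a b -> Hom (T0 a) (T0 b);
  mu : forall a : C, Hom (T0 (T0 a)) (T0 a);
  eta : forall a : C, Hom a (T0 a) }.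
Arguments T1 {C} _ {a b} _.
Arguments mu {C} _ _.
Arguments eta {C} _ _.

Record IsMonad (C : CatData) (T : MonadData C) : Prop := {
  T1_id : forall a : C, T1 T (idm a) = idm (T a);
  T1_comp : forall (a b c : C) (g : Hom b c) (f : Hom a b), T1 T (g ⋅ f) = T1 T g ⋅ T1 T f;
  mu_nat : forall (a b : C) (f : Hom a b), mu T b ⋅ T1 T (T1 T f) = T1 T f ⋅ mu T a;
  eta_nat : forall (a b : C) (f : Hom a b), eta T b ⋅ f = T1 T f ⋅ eta T a;
  mu_assoc : forall a : C, mu T a ⋅ T1 T (mu T a) = mu T a ⋅ mu T (T a);
  mu_eta_l : forall a : C, mu T a ⋅ T1 T (eta T a) = idm (T a);
  mu_eta_r : forall a : C, mu T a ⋅ eta T (T a) = idm (T a) }.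
Arguments IsMonad {C} T.

Record OpmonData (C : CatData) (M : MonoidalData C) (T : MonadData C) := {
  op2 : forall x y : C, Hom (T (tens M x y)) (tens M (T x) (T y));
  op0 : Hom (T (munit M)) (munit M) }.
Arguments OpmonData {C} M T.
Arguments op2 {C M T} _ _ _.
Arguments op0 {C M T} _.

Record IsBimonad (C : CatData) (M : MonoidalData C) (T : MonadData C)
    (B : OpmonData M T) : Prop := {
  op2_nat : forall (x x' y y' : C) (f : Hom x x') (g : Hom y y'),
      op2 B x' y' ⋅ T1 T (tensm M f g) = tensm M (T1 T f) (T1 T g) ⋅ op2 B x y;
  op2_assoc : forall x y z : C,
      assoc M (T x) (T y) (T z) ⋅ tensm M (op2 B x y) (idm (T z)) ⋅ op2 B (tens M x y) z
      = tensm M (idm (T x)) (op2 B y z) ⋅ op2 B x (tens M y z) ⋅ T1 T (assoc M x y z);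
  op_lunit : forall x : C,
      lam M (T x) ⋅ tensm M (op0 B) (idm (T x)) ⋅ op2 B (munit M) x = T1 T (lam M x);
  op_runit : forall x : C,
      rho M (T x) ⋅ tensm M (idm (T x)) (op0 B) ⋅ op2 B x (munit M) = T1 T (rho M x);
  mu_op2 : forall x y : C,
      op2 B x y ⋅ mu T (tens M x y)
      = tensm M (mu T x) (mu T y) ⋅ op2 B (T x) (T y) ⋅ T1 T (op2 B x y);
  mu_op0 : op0 B ⋅ mu T (munit M) = op0 B ⋅ T1 T (op0 B);
  eta_op2 : forall x y : C,
      op2 B x y ⋅ eta T (tens M x y) = tensm M (eta T x) (eta T y);
  eta_op0 : op0 B ⋅ eta T (munit M) = idm (munit M) }.
Arguments IsBimonad {C M T} B.

Record DoubleOpmonoidalMonad (D : DuoidalData) := {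
  dmon :> MonadData (dcat D);
  dmon_laws : IsMonad dmon;
  Tbul : OpmonData (bul D) dmon;
  Tbul_laws : IsBimonad Tbul;
  Tcirc : OpmonData (circ D) dmon;
  Tcirc_laws : IsBimonad Tcirc;
  dm_varpi : op0 Tbul ⋅ T1 dmon varpi
      = varpi ⋅ ocm D (op0 Tbul) (op0 Tbul) ⋅ op2 Tcirc (one D) (one D);
  dm_nu : obm D (op0 Tcirc) (op0 Tcirc) ⋅ op2 Tbul (bot D) (bot D) ⋅ T1 dmon nu
      = nu ⋅ op0 Tcirc;
  dm_iota : op0 Tbul ⋅ T1 dmon iota = iota ⋅ op0 Tcirc;
  dm_zeta : forall a b c d : dcat D,
      zeta (dmon a) (dmon b) (dmon c) (dmon d)
        ⋅ ocm D (op2 Tbul a b) (op2 Tbul c d) ⋅ op2 Tcirc (ob D a b) (ob D c d)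
      = obm D (op2 Tcirc a c) (op2 Tcirc b d) ⋅ op2 Tbul (oc D a c) (oc D b d)
        ⋅ T1 dmon (zeta a b c d) }.
Arguments Tbul {D} _.
Arguments Tcirc {D} _.

(* ∂^l_l : a∘(b•c) ≅ (a•1)∘(b•c) --ζ--> (a∘b)•(1∘c) ≅ (a∘b)•c *)
Definition dist_ll (D : DuoidalData) (N : NormalStructure D) (a b c : dcat D)
  : Hom (oc D a (ob D b c)) (ob D (oc D a b) c) :=
  obm D (idm (oc D a b)) (lam (circ D) c ⋅ ocm D (iotai N) (idm c))
  ⋅ zeta a (one D) b c ⋅ ocm D (rhoi (bul D) a) (idm (ob D b c)).

(* ∂^l_r : a∘(b•c) ≅ (1•a)∘(b•c) --ζ--> (1∘b)•(a∘c) ≅ b•(a∘c) *)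
Definition dist_lr (D : DuoidalData) (N : NormalStructure D) (a b c : dcat D)
  : Hom (oc D a (ob D b c)) (ob D b (oc D a c)) :=
  obm D (lam (circ D) b ⋅ ocm D (iotai N) (idm b)) (idm (oc D a c))
  ⋅ zeta (one D) a b c ⋅ ocm D (lami (bul D) a) (idm (ob D b c)).

(* ∂^r_l : (b•c)∘a ≅ (b•c)∘(a•1) --ζ--> (b∘a)•(c∘1) ≅ (b∘a)•c *)
Definition dist_rl (D : DuoidalData) (N : NormalStructure D) (a b c : dcat D)
  : Hom (oc D (ob D b c) a) (ob D (oc D b a) c) :=
  obm D (idm (oc D b a)) (rho (circ D) c ⋅ ocm D (idm c) (iotai N))
  ⋅ zeta b c a (one D) ⋅ ocm D (idm (ob D b c)) (rhoi (bul D) a).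

(* ∂^r_r : (b•c)∘a ≅ (b•c)∘(1•a) --ζ--> (b∘1)•(c∘a) ≅ b•(c∘a) *)
Definition dist_rr (D : DuoidalData) (N : NormalStructure D) (a b c : dcat D)
  : Hom (oc D (ob D b c) a) (ob D b (oc D c a)) :=
  obm D (rho (circ D) b ⋅ ocm D (idm b) (iotai N)) (idm (oc D c a))
  ⋅ zeta b c (one D) a ⋅ ocm D (idm (ob D b c)) (lami (bul D) a).
Arguments dist_ll {D} N a b c.
Arguments dist_lr {D} N a b c.
Arguments dist_rl {D} N a b c.
Arguments dist_rr {D} N a b c.

(* Main.v *)
Require Import Defs.
From Stdlib Require Import Setoid Morphisms.

Section H.
Variable D : Duoidal.
Variable N : NormalStructure D.
Variable T : DoubleOpmonoidalMonad D.

Lemma cA : forall (a b c d : dcat D) (h : Hom c d) (g : Hom b c) (f : Hom a b),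
  h ⋅ (g ⋅ f) = h ⋅ g ⋅ f.
Proof. exact (comp_assoc _ (claws (dcat D))). Qed.
Lemma cIl : forall (a b : dcat D) (f : Hom a b), idm b ⋅ f = f.
Proof. exact (comp_idl _ (claws (dcat D))). Qed.
Lemma cIr : forall (a b : dcat D) (f : Hom a b), f ⋅ idm a = f.
Proof. exact (comp_idr _ (claws (dcat D))). Qed.
Lemma ctx {a b c : dcat D} (L R : Hom a b) : L = R -> forall (h : Hom b c), h ⋅ L = h ⋅ R.
Proof. intros ->; reflexivity. Qed.

Lemma tcC (a b e c d k : dcat D) (g : Hom b e) (f : Hom a b) (g' : Hom d k) (f' : Hom c d) :
  tensm (circ D) (g ⋅ f) (g' ⋅ f') = tensm (circ D) g g' ⋅ tensm (circ D) f f'.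
Proof. exact (tens_comp _ _ (mlaws _ (circ D)) _ _ _ _ _ _ _ _ _ _). Qed.
Lemma tcB (a b e c d k : dcat D) (g : Hom b e) (f : Hom a b) (g' : Hom d k) (f' : Hom c d) :
  tensm (bul D) (g ⋅ f) (g' ⋅ f') = tensm (bul D) g g' ⋅ tensm (bul D) f f'.
Proof. exact (tens_comp _ _ (mlaws _ (bul D)) _ _ _ _ _ _ _ _ _ _). Qed.
Lemma tcC_ctx (a b e c d k x : dcat D) (g : Hom b e) (f : Hom a b) (g' : Hom d k) (f' : Hom c d)
  (h : Hom (tens (circ D) e k) x) :
  h ⋅ tensm (circ D) g g' ⋅ tensm (circ D) f f' = h ⋅ tensm (circ D) (g ⋅ f) (g' ⋅ f').
Proof. rewrite tcC, cA; reflexivity. Qed.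
Lemma tcB_ctx (a b e c d k x : dcat D) (g : Hom b e) (f : Hom a b) (g' : Hom d k) (f' : Hom c d)
  (h : Hom (tens (bul D) e k) x) :
  h ⋅ tensm (bul D) g g' ⋅ tensm (bul D) f f' = h ⋅ tensm (bul D) (g ⋅ f) (g' ⋅ f').
Proof. rewrite tcB, cA; reflexivity. Qed.
Lemma tiC (a c : dcat D) : tensm (circ D) (idm a) (idm c) = idm _.
Proof. exact (tens_id _ _ (mlaws _ (circ D)) a c). Qed.
Lemma tiB (a c : dcat D) : tensm (bul D) (idm a) (idm c) = idm _.
Proof. exact (tens_id _ _ (mlaws _ (bul D)) a c). Qed.

Lemma T1c (a b c : dcat D) (g : Hom b c) (f : Hom a b) : T1 T (g ⋅ f) = T1 T g ⋅ T1 T f.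
Proof. exact (T1_comp _ _ (dmon_laws _ T) _ _ _ _ _). Qed.
Lemma T1c_ctx (a b c x : dcat D) (g : Hom b c) (f : Hom a b) (h : Hom (T c) x) :
  h ⋅ T1 T g ⋅ T1 T f = h ⋅ T1 T (g ⋅ f).
Proof. rewrite T1c, cA; reflexivity. Qed.
Lemma T1i (a : dcat D) : T1 T (idm a) = idm (T a).
Proof. exact (T1_id _ _ (dmon_laws _ T) a). Qed.

Definition TB := Tbul_laws _ T.
Definition TC := Tcirc_laws _ T.
Definition DL := dlaws D.
End H.

Ltac normA := repeat rewrite cA.
Ltac crw e :=
  first [ rewrite e
        | let H := fresh in
          pose proof (fun c (h : Hom _ c) => ctx _ _ _ e h) as H;
          cbv beta in H; repeat setoid_rewrite cA in H;
          rewrite H; clear H ].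
Ltac unf := try unfold dist_ll in *; try unfold dist_lr in *; try unfold dist_rl in *; try unfold dist_rr in *; try unfold oc in *; try unfold ob in *; try unfold ocm in *; try unfold obm in *; try unfold one in *; try unfold bot in *.
Ltac clean := repeat first [rewrite T1i | rewrite tiC | rewrite tiB | rewrite cIl | rewrite cIr].
Section L.
Variable D : Duoidal.
Variable N : NormalStructure D.
Variable T : DoubleOpmonoidalMonad D.

Lemma H3 : iotai N ⋅ op0 (Tbul T) = op0 (Tcirc T) ⋅ T1 T (iotai N).
Proof.
  transitivity (iotai N ⋅ op0 (Tbul T) ⋅ T1 T (iota ⋅ iotai N)).
  - rewrite iota_inv1. unf. rewrite T1i, cIr. reflexivity.
  - rewrite T1c. normA. crw (dm_iota _ T). normA. rewrite iota_inv2, cIl. reflexivity.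
Qed.
End L.
Section L.
Variable D : Duoidal.
Variable N : NormalStructure D.
Variable T : DoubleOpmonoidalMonad D.

Lemma H1l (c : dcat D) : T1 T (lam (circ D) c ⋅ tensm (circ D) (iotai N) (idm c))
  = lam (circ D) (T c) ⋅ tensm (circ D) (op0 (Tcirc T) ⋅ T1 T (iotai N)) (idm (T c))
    ⋅ op2 (Tcirc T) (munit (bul D)) c.
Proof.
  rewrite T1c, <- (op_lunit _ _ _ _ (TC D T) c). normA.
  crw (op2_nat _ _ _ _ (TC D T) _ _ _ _ (iotai N) (idm c)). clean.
  rewrite tcC_ctx. clean. reflexivity.
Qed.
Lemma H1r (c : dcat D) : T1 T (rho (circ D) c ⋅ tensm (circ D) (idm c) (iotai N))
  = rho (circ D) (T c) ⋅ tensm (circ D) (idm (T c)) (op0 (Tcirc T) ⋅ T1 T (iotai N))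
    ⋅ op2 (Tcirc T) c (munit (bul D)).
Proof.
  rewrite T1c, <- (op_runit _ _ _ _ (TC D T) c). normA.
  crw (op2_nat _ _ _ _ (TC D T) _ _ _ _ (idm c) (iotai N)). clean.
  rewrite tcC_ctx. clean. reflexivity.
Qed.
Lemma H2r (a : dcat D) : rhoi (bul D) (T a) = tensm (bul D) (idm (T a)) (op0 (Tbul T))
   ⋅ op2 (Tbul T) a (munit (bul D)) ⋅ T1 T (rhoi (bul D) a).
Proof.
  transitivity (rhoi (bul D) (T a) ⋅ (rho (bul D) (T a) ⋅ (tensm (bul D) (idm (T a)) (op0 (Tbul T))
   ⋅ op2 (Tbul T) a (munit (bul D)) ⋅ T1 T (rhoi (bul D) a)))).
  - normA. crw (op_runit _ _ _ _ (TB D T) a). rewrite T1c_ctx, (rho_inv1 _ _ (mlaws _ (bul D))).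
    clean. reflexivity.
  - normA. rewrite (rho_inv2 _ _ (mlaws _ (bul D))). clean. reflexivity.
Qed.
Lemma H2l (a : dcat D) : lami (bul D) (T a) = tensm (bul D) (op0 (Tbul T)) (idm (T a))
   ⋅ op2 (Tbul T) (munit (bul D)) a ⋅ T1 T (lami (bul D) a).
Proof.
  transitivity (lami (bul D) (T a) ⋅ (lam (bul D) (T a) ⋅ (tensm (bul D) (op0 (Tbul T)) (idm (T a))
   ⋅ op2 (Tbul T) (munit (bul D)) a ⋅ T1 T (lami (bul D) a)))).
  - normA. crw (op_lunit _ _ _ _ (TB D T) a). rewrite T1c_ctx, (lam_inv1 _ _ (mlaws _ (bul D))).
    clean. reflexivity.
  - normA. rewrite (lam_inv2 _ _ (mlaws _ (bul D))). clean. reflexivity.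
Qed.

Lemma zy (x y y' a b : dcat D) (g : Hom y y') :
  zeta x y' a b ⋅ tensm (circ D) (tensm (bul D) (idm x) g) (idm (tens (bul D) a b))
  = tensm (bul D) (idm (tens (circ D) x a)) (tensm (circ D) g (idm b)) ⋅ zeta x y a b.
Proof. pose proof (zeta_nat _ (DL D) _ _ _ _ _ _ _ _ (idm x) g (idm a) (idm b)) as H.
  unf. rewrite !tiB, !tiC in H. exact H. Qed.
Lemma zx (x x' y a b : dcat D) (g : Hom x x') :
  zeta x' y a b ⋅ tensm (circ D) (tensm (bul D) g (idm y)) (idm (tens (bul D) a b))
  = tensm (bul D) (tensm (circ D) g (idm a)) (idm (tens (circ D) y b)) ⋅ zeta x y a b.
Proof. pose proof (zeta_nat _ (DL D) _ _ _ _ _ _ _ _ g (idm y) (idm a) (idm b)) as H.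
  unf. rewrite !tiB, !tiC in H. exact H. Qed.
Lemma zb (x y a b b' : dcat D) (g : Hom b b') :
  zeta x y a b' ⋅ tensm (circ D) (idm (tens (bul D) x y)) (tensm (bul D) (idm a) g)
  = tensm (bul D) (idm (tens (circ D) x a)) (tensm (circ D) (idm y) g) ⋅ zeta x y a b.
Proof. pose proof (zeta_nat _ (DL D) _ _ _ _ _ _ _ _ (idm x) (idm y) (idm a) g) as H.
  unf. rewrite !tiB, !tiC in H. exact H. Qed.
Lemma za (x y a a' b : dcat D) (g : Hom a a') :
  zeta x y a' b ⋅ tensm (circ D) (idm (tens (bul D) x y)) (tensm (bul D) g (idm b))
  = tensm (bul D) (tensm (circ D) (idm x) g) (idm (tens (circ D) y b)) ⋅ zeta x y a b.
Proof. pose proof (zeta_nat _ (DL D) _ _ _ _ _ _ _ _ (idm x) (idm y) g (idm b)) as H.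
  unf. rewrite !tiB, !tiC in H. exact H. Qed.
End L.
Section L2.
Variable D : Duoidal.
Variable T : DoubleOpmonoidalMonad D.
Lemma H2r' (a : dcat D) : rhoi (bul D) (T a) = tensm (bul D) (idm (T a)) (op0 (Tbul T))
   ⋅ (op2 (Tbul T) a (munit (bul D)) ⋅ T1 T (rhoi (bul D) a)).
Proof. rewrite cA. apply H2r. Qed.
Lemma H2l' (a : dcat D) : lami (bul D) (T a) = tensm (bul D) (op0 (Tbul T)) (idm (T a))
   ⋅ (op2 (Tbul T) (munit (bul D)) a ⋅ T1 T (lami (bul D) a)).
Proof. rewrite cA. apply H2l. Qed.
Lemma tcC_sl (a b e c d : dcat D) (g : Hom b e) (f : Hom a b) (k : Hom c d) :
  tensm (circ D) (g ⋅ f) k = tensm (circ D) g (idm d) ⋅ tensm (circ D) f k.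
Proof. rewrite <- tcC, cIl. reflexivity. Qed.
Lemma tcC_sr (a b e c d : dcat D) (g : Hom b e) (f : Hom a b) (k : Hom c d) :
  tensm (circ D) k (g ⋅ f) = tensm (circ D) (idm d) g ⋅ tensm (circ D) k f.
Proof. rewrite <- tcC, cIl. reflexivity. Qed.
End L2.
Section L.
Variable D : Duoidal.
Variable N : NormalStructure D.
Variable T : DoubleOpmonoidalMonad D.
Lemma case1 (a b c : dcat D) :
    obm D (op2 (Tcirc T) a b) (idm (T c)) ⋅ op2 (Tbul T) (oc D a b) c
      ⋅ T1 T (dist_ll N a b c)
    = dist_ll N (T a) (T b) (T c) ⋅ ocm D (idm (T a)) (op2 (Tbul T) b c)
      ⋅ op2 (Tcirc T) a (ob D b c).
Proof.
  unf. rewrite !T1c. normA.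
  crw (op2_nat _ _ _ _ (TB D T) _ _ _ _ (idm (tens (circ D) a b)) (lam (circ D) c ⋅ tensm (circ D) (iotai N) (idm c))).
  clean. rewrite tcB_ctx || rewrite <- tcB. clean.
  rewrite H1l.
  rewrite <- (cIl _ _ _ (op2 (Tcirc T) a b)), tcB. normA.
  pose proof (dm_zeta _ T a (munit (bul D)) b c) as Z. unf. crw (eq_sym Z). normA.
  crw (op2_nat _ _ _ _ (TC D T) _ _ _ _ (rhoi (bul D) a) (idm (tens (bul D) b c))). clean.
  rewrite tcC_ctx. clean.
  rewrite tcC_ctx. clean. rewrite H2r', (tcC_sl _ _ _ _ _ _ (tensm (bul D) (idm (T a)) (op0 (Tbul T)))). normA.
  crw (zy _ (T a) _ _ (T b) (T c) (op0 (Tbul T))). rewrite <- tcB. clean. normA.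
  rewrite tcC_ctx, cIl, H3. reflexivity.
Qed.

Lemma case3 (a b c : dcat D) :
    obm D (idm (T b)) (op2 (Tcirc T) a c) ⋅ op2 (Tbul T) b (oc D a c)
      ⋅ T1 T (dist_lr N a b c)
    = dist_lr N (T a) (T b) (T c) ⋅ ocm D (idm (T a)) (op2 (Tbul T) b c)
      ⋅ op2 (Tcirc T) a (ob D b c).
Proof.
  unf. rewrite !T1c. normA.
  crw (op2_nat _ _ _ _ (TB D T) _ _ _ _ (lam (circ D) b ⋅ tensm (circ D) (iotai N) (idm b)) (idm (tens (circ D) a c))).
  clean. rewrite <- tcB. clean.
  rewrite H1l.
  rewrite <- (cIl _ _ _ (op2 (Tcirc T) a c)), tcB. normA.
  pose proof (dm_zeta _ T (munit (bul D)) a b c) as Z. unf. crw (eq_sym Z). normA.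
  crw (op2_nat _ _ _ _ (TC D T) _ _ _ _ (lami (bul D) a) (idm (tens (bul D) b c))). clean.
  rewrite tcC_ctx. clean.
  rewrite tcC_ctx. clean. rewrite H2l', (tcC_sl _ _ _ _ _ _ (tensm (bul D) (op0 (Tbul T)) (idm (T a)))). normA.
  crw (zx _ _ _ (T a) (T b) (T c) (op0 (Tbul T))). rewrite <- tcB. clean. normA.
  rewrite tcC_ctx, cIl, H3. reflexivity.
Qed.

Lemma case4 (a b c : dcat D) :
    obm D (op2 (Tcirc T) b a) (idm (T c)) ⋅ op2 (Tbul T) (oc D b a) c
      ⋅ T1 T (dist_rl N a b c)
    = dist_rl N (T a) (T b) (T c) ⋅ ocm D (op2 (Tbul T) b c) (idm (T a))
      ⋅ op2 (Tcirc T) (ob D b c) a.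
Proof.
  unf. rewrite !T1c. normA.
  crw (op2_nat _ _ _ _ (TB D T) _ _ _ _ (idm (tens (circ D) b a)) (rho (circ D) c ⋅ tensm (circ D) (idm c) (iotai N))).
  clean. rewrite <- tcB. clean.
  rewrite H1r.
  rewrite <- (cIl _ _ _ (op2 (Tcirc T) b a)), tcB. normA.
  pose proof (dm_zeta _ T b c a (munit (bul D))) as Z. unf. crw (eq_sym Z). normA.
  crw (op2_nat _ _ _ _ (TC D T) _ _ _ _ (idm (tens (bul D) b c)) (rhoi (bul D) a)). clean.
  rewrite tcC_ctx. clean.
  rewrite tcC_ctx. clean. rewrite H2r', (tcC_sr _ _ _ _ _ _ (tensm (bul D) (idm (T a)) (op0 (Tbul T)))). normA.
  crw (zb _ (T b) (T c) (T a) _ _ (op0 (Tbul T))). rewrite <- tcB. clean. normA.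
  rewrite tcC_ctx. clean. rewrite H3. reflexivity.
Qed.

Lemma case2 (a b c : dcat D) :
    obm D (idm (T b)) (op2 (Tcirc T) c a) ⋅ op2 (Tbul T) b (oc D c a)
      ⋅ T1 T (dist_rr N a b c)
    = dist_rr N (T a) (T b) (T c) ⋅ ocm D (op2 (Tbul T) b c) (idm (T a))
      ⋅ op2 (Tcirc T) (ob D b c) a.
Proof.
  unf. rewrite !T1c. normA.
  crw (op2_nat _ _ _ _ (TB D T) _ _ _ _ (rho (circ D) b ⋅ tensm (circ D) (idm b) (iotai N)) (idm (tens (circ D) c a))).
  clean. rewrite <- tcB. clean.
  rewrite H1r.
  rewrite <- (cIl _ _ _ (op2 (Tcirc T) c a)), tcB. normA.
  pose proof (dm_zeta _ T b c (munit (bul D)) a) as Z. unf. crw (eq_sym Z). normA.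
  crw (op2_nat _ _ _ _ (TC D T) _ _ _ _ (idm (tens (bul D) b c)) (lami (bul D) a)). clean.
  rewrite tcC_ctx. clean.
  rewrite tcC_ctx. clean. rewrite H2l', (tcC_sr _ _ _ _ _ _ (tensm (bul D) (op0 (Tbul T)) (idm (T a)))). normA.
  crw (za _ (T b) (T c) _ _ (T a) (op0 (Tbul T))). rewrite <- tcB. clean. normA.
  rewrite tcC_ctx. clean. rewrite H3. reflexivity.
Qed.
End L.

Theorem mainTheorem4 (D : Duoidal) (N : NormalStructure D)
  (T : DoubleOpmonoidalMonad D) :
  forall a b c : dcat D,
    (* (1) *)
    obm D (op2 (Tcirc T) a b) (idm (T c)) ⋅ op2 (Tbul T) (oc D a b) c
      ⋅ T1 T (dist_ll N a b c)
    = dist_ll N (T a) (T b) (T c) ⋅ ocm D (idm (T a)) (op2 (Tbul T) b c)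
      ⋅ op2 (Tcirc T) a (ob D b c)
 /\ (* (2) *)
    obm D (idm (T b)) (op2 (Tcirc T) c a) ⋅ op2 (Tbul T) b (oc D c a)
      ⋅ T1 T (dist_rr N a b c)
    = dist_rr N (T a) (T b) (T c) ⋅ ocm D (op2 (Tbul T) b c) (idm (T a))
      ⋅ op2 (Tcirc T) (ob D b c) a
 /\ (* (3) *)
    obm D (idm (T b)) (op2 (Tcirc T) a c) ⋅ op2 (Tbul T) b (oc D a c)
      ⋅ T1 T (dist_lr N a b c)
    = dist_lr N (T a) (T b) (T c) ⋅ ocm D (idm (T a)) (op2 (Tbul T) b c)
      ⋅ op2 (Tcirc T) a (ob D b c)
 /\ (* (4) *)
    obm D (op2 (Tcirc T) b a) (idm (T c)) ⋅ op2 (Tbul T) (oc D b a) c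
      ⋅ T1 T (dist_rl N a b c)
    = dist_rl N (T a) (T b) (T c) ⋅ ocm D (op2 (Tbul T) b c) (idm (T a))
      ⋅ op2 (Tcirc T) (ob D b c) a.
Proof.
  intros a b c.
  split; [apply case1|]. split; [apply case2|]. split; [apply case3|apply case4].
Qed.
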